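(* Let $(\bar x,\bar y)$ be a local minimax point of $\min_{x\in X}\max_{y\in Y}f(x,y)$. Suppose $f$ is twice semidifferentiable at $(\bar x,\bar y)$, the separation property holds for the subderivative of $f$ at $(\bar x,\bar y)$, and for every $h\in T_Y(\bar y)\setminus\{0\}$ with $\mathrm{d}_yf(\bar x,\bar y)(h)=0$ we have $$\mathrm{d}^2_{yy}f(\bar x,\bar y)(h)-\mathrm{d}^2\delta_X(\bar x;\mathrm{d}_xf(\bar x,\bar y))(0)-\mathrm{d}^2\delta_Y(\bar y;\mathrm{d}_yf(\bar x,\bar y))(h)<0,$$ where at least one of $\mathrm{d}^2\delta_X(\bar x;\mathrm{d}_xf(\bar x,\bar y))(0)$ and $\mathrm{d}^2\delta_Y(\bar y;\mathrm{d}_yf(\bar x,\bar y))(h)$ is finite. Then $(\bar x,\bar y)$ is a calm local minimax point.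
   Context: $X\subseteq\mathbb{R}^n$, $Y\subseteq\mathbb{R}^m$ nonempty closed, $f:\mathbb{R}^n\times\mathbb{R}^m\to\mathbb{R}$; $\mathbb{B}_\epsilon(z)$ closed Euclidean ball. Standing assumption: for every $x\in X$, $\bar y\in Y$, $\epsilon\ge0$ the maximum of $f(x,\cdot)$ over $Y\cap\mathbb{B}_\epsilon(\bar y)$ is attained. A radius function is $\tau:[0,\infty)\to[0,\infty)$ with $\tau(0)=0$, $\tau(\delta)\to0$ as $\delta\downarrow0$; calm at $0$ if $\tau(\delta)\le\kappa\delta$ for all $\delta\in[0,\delta_1]$ for some $\kappa,\delta_1>0$. $(\bar x,\bar y)\in X\times Y$ is a local minimax point if there exist $\delta_0>0$ and a radius function $\tau$ with $f(\bar x,y)\le f(\bar x,\bar y)\le\max_{y'\in Y\cap\mathbb{B}_{\tau(\delta)}(\bar y)}f(x,y')$ for all $\delta\in(0,\delta_0]$, $x\in X\cap\mathbb{B}_\delta(\bar x)$, $y\in Y\cap\mathbb{B}_\delta(\bar y)$; calm local minimax if moreover $\tau$ can be taken calm at $0$. Variational notation: for $\psi:\mathbb{R}^r\to\mathbb{R}$, $\mathrm{d}\psi(\bar z)(w):=\liminf_{t\downarrow0,w'\to w}\frac{\psi(\bar z+tw')-\psi(\bar z)}{t}$; semidifferentiable at $\bar z$ if for each $w$ this is a limit (real-valued); $\mathrm{d}^2\psi(\bar z)(w):=\liminf_{t\downarrow0,w'\to w}\frac{\psi(\bar z+tw')-\psi(\bar z)-t\,\mathrm{d}\psi(\bar z)(w')}{\frac12t^2}$;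 twice semidifferentiable if semidifferentiable and for each $w$ this liminf is a limit (real-valued). $\mathrm{d}_xf(\bar x,\bar y)(u)$ is the subderivative of $f(\cdot,\bar y)$ at $\bar x$; $\mathrm{d}_yf(\bar x,\bar y)(h)$ and $\mathrm{d}^2_{yy}f(\bar x,\bar y)(h)$ are the subderivative and second subderivative of $f(\bar x,\cdot)$ at $\bar y$; $\mathrm{d}f(\bar x,\bar y)(u,h)$ is the subderivative of $f$. The separation property for the subderivative holds at $(\bar x,\bar y)$ if $\mathrm{d}f(\bar x,\bar y)(u,h)=\mathrm{d}_xf(\bar x,\bar y)(u)+\mathrm{d}_yf(\bar x,\bar y)(h)$ for all $(u,h)$. $T_S(\bar z)$ is the tangent cone. For closed $S$, $\bar z\in S$, $\varphi:\mathbb{R}^r\to\mathbb{R}$: $\mathrm{d}^2\delta_S(\bar z;\varphi)(w):=\liminf_{t\downarrow0,\,w'\to w,\ \bar z+tw'\in S}\frac{-2\varphi(w')}{t}$ ($+\infty$ if no such $t,w'$). *)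

(* Defs.v *)
From HB Require Import structures.
From mathcomp Require Import all_boot all_order all_algebra.
From mathcomp Require Import all_classical all_reals all_analysis.
Set Implicit Arguments. Unset Strict Implicit. Unset Printing Implicit Defensive.
Import Order.TTheory GRing.Theory Num.Theory.
Import numFieldNormedType.Exports.
Local Open Scope classical_set_scope.
Local Open Scope ring_scope.

Section Defs.
Variable R : realType.

Definition enorm {r : nat} (v : 'rV[R]_r) : R := Num.sqrt (\sum_i (v 0 i) ^+ 2).

Definition eball {r : nat} (z : 'rV[R]_r) (eps : R) : set 'rV[R]_r :=
  [set v | enorm (v - z) <= eps].

(* liminf_{t \downarrow 0, w' -> w, P t w'} q t w' (inf of empty set = +oo) *)
Definition liminf0 {r : nat} (q : R -> 'rV[R]_r -> \bar R)
  (P : R -> 'rV[R]_r -> Prop) (w : 'rV[R]_r) : \bar R :=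
  ereal_sup [set ereal_inf [set q p.1 p.2 | p in
     [set p : R * 'rV[R]_r | 0 < p.1 < d /\ enorm (p.2 - w) < d /\ P p.1 p.2]]
    | d in [set d : R | 0 < d]].

Definition haslim0 {r : nat} (q : R -> 'rV[R]_r -> \bar R) (w : 'rV[R]_r) (L : R)
  : Prop :=
  forall eps : R, 0 < eps -> exists d : R, 0 < d /\
    forall (t : R) (w' : 'rV[R]_r), 0 < t < d -> enorm (w' - w) < d ->
      (`| q t w' - L%:E | < eps%:E)%E.

Definition dq1 {r : nat} (psi : 'rV[R]_r -> R) (z : 'rV[R]_r) :
  R -> 'rV[R]_r -> \bar R :=
  fun t w' => ((psi (z + t *: w') - psi z) / t)%:E.

Definition subderiv {r : nat} (psi : 'rV[R]_r -> R) (z w : 'rV[R]_r) : \bar R :=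
  liminf0 (dq1 psi z) (fun _ _ => True) w.

Definition semidiff {r : nat} (psi : 'rV[R]_r -> R) (z : 'rV[R]_r) : Prop :=
  forall w, exists L : R, haslim0 (dq1 psi z) w L.

Definition dq2 {r : nat} (psi : 'rV[R]_r -> R) (z : 'rV[R]_r) :
  R -> 'rV[R]_r -> \bar R :=
  fun t w' => (((psi (z + t *: w') - psi z)%:E - t%:E * subderiv psi z w')
                 * (2 / t ^+ 2)%:E)%E.

Definition subderiv2 {r : nat} (psi : 'rV[R]_r -> R) (z w : 'rV[R]_r) : \bar R :=
  liminf0 (dq2 psi z) (fun _ _ => True) w.

Definition twice_semidiff {r : nat} (psi : 'rV[R]_r -> R) (z : 'rV[R]_r) : Prop :=
  semidiff psi z /\ forall w, exists L : R, haslim0 (dq2 psi z) w L.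

Definition d2delta {r : nat} (S : set 'rV[R]_r) (z : 'rV[R]_r)
  (phi : 'rV[R]_r -> \bar R) (w : 'rV[R]_r) : \bar R :=
  liminf0 (fun t w' => ((-2)%:E * phi w' * (t^-1)%:E)%E)
          (fun t w' => S (z + t *: w')) w.

Definition tangent_cone {r : nat} (S : set 'rV[R]_r) (z : 'rV[R]_r) : set 'rV[R]_r :=
  [set w | exists (t : nat -> R) (ws : nat -> 'rV[R]_r),
     (forall k, 0 < t k) /\ (forall k, S (z + t k *: ws k)) /\
     (forall eps : R, 0 < eps -> exists N : nat, forall k : nat, (N <= k)%N ->
         t k < eps /\ enorm (ws k - w) < eps)].

Section Minimax.
Variables (n m : nat) (X : set 'rV[R]_n) (Y : set 'rV[R]_m)
          (f : 'rV[R]_n -> 'rV[R]_m -> R).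

Definition fjoint (z : 'rV[R]_(n + m)) : R := f (lsubmx z) (rsubmx z).

Definition d_x (xb : 'rV[R]_n) (yb : 'rV[R]_m) (u : 'rV[R]_n) : \bar R :=
  subderiv (fun x => f x yb) xb u.
Definition d_y (xb : 'rV[R]_n) (yb : 'rV[R]_m) (h : 'rV[R]_m) : \bar R :=
  subderiv (fun y => f xb y) yb h.
Definition d2_yy (xb : 'rV[R]_n) (yb : 'rV[R]_m) (h : 'rV[R]_m) : \bar R :=
  subderiv2 (fun y => f xb y) yb h.
Definition d_joint (xb : 'rV[R]_n) (yb : 'rV[R]_m) (u : 'rV[R]_n) (h : 'rV[R]_m)
  : \bar R := subderiv fjoint (row_mx xb yb) (row_mx u h).

Definition separation_property (xb : 'rV[R]_n) (yb : 'rV[R]_m) : Prop :=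
  forall u h, d_joint xb yb u h = (d_x xb yb u + d_y xb yb h)%E.

(* standing assumption: max of f(x,.) over Y \cap B_eps(yb) is attained *)
Definition max_attained : Prop :=
  forall x yb (eps : R), X x -> Y yb -> 0 <= eps ->
    exists2 ys, (Y `&` eball yb eps) ys &
      forall y, (Y `&` eball yb eps) y -> f x y <= f x ys.

Definition maxY (x : 'rV[R]_n) (yb : 'rV[R]_m) (eps : R) : \bar R :=
  ereal_sup [set (f x y')%:E | y' in Y `&` eball yb eps].

Definition radius_function (tau : R -> R) : Prop :=
  (forall d, 0 <= d -> 0 <= tau d) /\ tau 0 = 0 /\
  (forall eps : R, 0 < eps -> exists d1 : R, 0 < d1 /\
      forall d, 0 < d < d1 -> tau d < eps).

Definition calm_at0 (tau : R -> R) : Prop :=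
  exists kappa d1 : R, 0 < kappa /\ 0 < d1 /\
    forall d, 0 <= d <= d1 -> tau d <= kappa * d.

Definition minimax_with (tau : R -> R) (xb : 'rV[R]_n) (yb : 'rV[R]_m) : Prop :=
  exists d0 : R, 0 < d0 /\
    forall (d : R) x y, 0 < d <= d0 ->
      (X `&` eball xb d) x -> (Y `&` eball yb d) y ->
      f xb y <= f xb yb /\ ((f xb yb)%:E <= maxY x yb (tau d))%E.

Definition local_minimax (xb : 'rV[R]_n) (yb : 'rV[R]_m) : Prop :=
  X xb /\ Y yb /\ exists tau, radius_function tau /\ minimax_with tau xb yb.

Definition calm_local_minimax (xb : 'rV[R]_n) (yb : 'rV[R]_m) : Prop :=
  X xb /\ Y yb /\
  exists tau, radius_function tau /\ calm_at0 tau /\ minimax_with tau xb yb.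

End Minimax.
End Defs.

(* Main.v *)
Require Import Defs.
From HB Require Import structures.
From mathcomp Require Import all_boot all_order all_algebra.
From mathcomp Require Import all_classical all_reals all_analysis.
From mathcomp Require Import ring lra.
Import Order.TTheory GRing.Theory Num.Theory.
Import numFieldNormedType.Exports.
Local Open Scope classical_set_scope.
Local Open Scope ring_scope.

Section H.
Variable R : realType.

Lemma ereal_dist_fin (x : \bar R) (L e : R) :
  (`|x - L%:E| < e%:E)%E -> exists r, x = r%:E /\ `|r - L| < e.
Proof. by case: x => [r||] //= H; exists r; split. Qed.

Lemma enorm_ge0 r (v : 'rV[R]_r) : 0 <= enorm v.
Proof. exact: sqrtr_ge0. Qed.

Lemma enorm0 r : enorm (0 : 'rV[R]_r) = 0.
Proof. by rewrite /enorm big1 ?sqrtr0 // => i _; rewrite mxE expr0n. Qed.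

Lemma enormZ r (c : R) (v : 'rV[R]_r) : enorm (c *: v) = `|c| * enorm v.
Proof.
rewrite /enorm (eq_bigr (fun i => c ^+ 2 * (v 0 i) ^+ 2)); last first.
  by move=> i _; rewrite mxE exprMn.
by rewrite -mulr_sumr sqrtrM ?sqr_ge0 // sqrtr_sqr.
Qed.

Lemma enormN r (v : 'rV[R]_r) : enorm (- v) = enorm v.
Proof. by rewrite -scaleN1r enormZ normrN normr1 mul1r. Qed.

Lemma enorm_eq0 r (v : 'rV[R]_r) : enorm v = 0 -> v = 0.
Proof.
rewrite /enorm => /eqP; rewrite sqrtr_eq0 => H.
have H0 : \sum_i v 0 i ^+ 2 = 0.
  by apply/eqP; rewrite eq_le H sumr_ge0 // => i _; rewrite sqr_ge0.
apply/rowP => i; rewrite mxE; apply/eqP; rewrite -sqrf_eq0; apply/eqP.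
move: H0 => /eqP; rewrite psumr_eq0 => [/allP/(_ i (mem_index_enum _))/implyP/(_ isT)/eqP //|].
by move=> j _; rewrite sqr_ge0.
Qed.

Lemma coord_le_enorm r (v : 'rV[R]_r) i : `|v 0 i| <= enorm v.
Proof.
rewrite /enorm -(sqrtr_sqr (v 0 i)) ler_sqrt; last by rewrite sumr_ge0 // => j _; rewrite sqr_ge0.
by rewrite (bigD1 i) //= lerDl sumr_ge0 // => j _; rewrite sqr_ge0.
Qed.

Lemma mxnorm_le_enorm r (v : 'rV[R]_r) : `|v| <= enorm v.
Proof.
rewrite [`|v|]mx_normrE; apply: bigmax_le; first exact: enorm_ge0.
by move=> [i j] _ /=; rewrite ord1; exact: coord_le_enorm.
Qed.

Lemma enorm_le_mxnorm r (v : 'rV[R]_r) : enorm v <= r.+1%:R * `|v|.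
Proof.
have hv : forall i, `|v 0 i| <= `|v|.
  by move=> i; rewrite [`|v|]mx_normrE; exact: (le_bigmax _ (fun ij => `|v ij.1 ij.2|) (ord0, i)).
rewrite /enorm -(@ger0_norm _ (r.+1%:R * `|v|)) ?mulr_ge0 // -sqrtr_sqr ler_sqrt; last by rewrite sqr_ge0.
apply: (@le_trans _ _ (\sum_(i < r) `|v| ^+ 2)).
  apply: ler_sum => i _; rewrite -real_normK ?num_real // lerXn2r ?nnegrE //.
rewrite sumr_const card_ord exprMn [leRHS]mulrC -(mulr_natr (`|v| ^+ 2) r).
apply: ler_wpM2l; first exact: sqr_ge0.
rewrite -natrX ler_nat; case: r {hv v} => // r; rewrite expnS mulnC.
by rewrite (leq_trans (leqnSn _)) // leq_pmulr.
Qed.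

Lemma enorm_row_mx n m (a : 'rV[R]_n) (b : 'rV[R]_m) :
  enorm (row_mx a b) = Num.sqrt (enorm a ^+ 2 + enorm b ^+ 2).
Proof.
rewrite /enorm !sqr_sqrtr ?sumr_ge0 // => [|i _|i _]; try by rewrite sqr_ge0.
by rewrite big_split_ord /=; congr (Num.sqrt (_ + _)); apply: eq_bigr => i _;
  rewrite ?row_mxEl ?row_mxEr.
Qed.

Lemma enorm_row_mx0l n m (b : 'rV[R]_m) : enorm (row_mx (0 : 'rV[R]_n) b) = enorm b.
Proof. by rewrite enorm_row_mx enorm0 expr0n add0r sqrtr_sqr ger0_norm // enorm_ge0. Qed.

Lemma enorm_row_mx0r n m (a : 'rV[R]_n) : enorm (row_mx a (0 : 'rV[R]_m)) = enorm a.
Proof. by rewrite enorm_row_mx enorm0 expr0n addr0 sqrtr_sqr ger0_norm // enorm_ge0. Qed.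

Lemma enorm_row_mx_le n m (a : 'rV[R]_n) (b : 'rV[R]_m) :
  enorm (row_mx a b) <= enorm a + enorm b.
Proof.
rewrite enorm_row_mx -(@ger0_norm _ (enorm a + enorm b)) ?addr_ge0 ?enorm_ge0 //.
rewrite -sqrtr_sqr ler_sqrt ?sqr_ge0 // sqrrD lerD2r lerDl.
by rewrite mulrn_wge0 // mulr_ge0 // enorm_ge0.
Qed.

Lemma liminf0_lim r (q : R -> 'rV[R]_r -> \bar R) w L :
  haslim0 q w L -> liminf0 q (fun _ _ => True) w = L%:E.
Proof.
move=> H; apply/eqP; rewrite eq_le; apply/andP; split.
- apply: ge_ereal_sup => _ [d d0 <-].
  apply/lee_addgt0Pr => e e0.
  have [d' [d'0 Hd']] := H e e0.
  pose t := Num.min d d' / 2.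
  have t0 : 0 < t by rewrite divr_gt0 // lt_min d0 d'0.
  have tmin : t < Num.min d d' by rewrite /t ltr_pdivrMr // ltr_pMr ?ltr1n // lt_min d0 d'0.
  have [td td'] : t < d /\ t < d' by move: tmin; rewrite lt_min => /andP.
  have Hw : enorm (w - w) = 0 by rewrite subrr enorm0.
  have tw' : enorm (w - w) < d' by rewrite Hw.
  have tt' : 0 < t < d' by rewrite t0 td'.
  have [x [hx hx']] := ereal_dist_fin _ _ _ (Hd' t w tt' tw').
  apply: ge_ereal_inf; exists (q t w); first by exists (t, w) => //=; split; [rewrite t0 td|split=> //; rewrite Hw].
  by rewrite hx -EFinD lee_fin; move: hx'; rewrite ltr_norml ltrBlDl => /andP[_ /ltW].
- apply/lee_subgt0Pr => e e0.
  have [d [d0 Hd]] := H e e0.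
  apply: le_ereal_sup_tmp; exists (ereal_inf [set q p.1 p.2 | p in
     [set p : R * 'rV[R]_r | 0 < p.1 < d /\ enorm (p.2 - w) < d /\ True]]); first by exists d.
  apply: le_ereal_inf_tmp => _ [[t w'] /= [tt [tw _]] <-].
  have [x [hx hx']] := ereal_dist_fin _ _ _ (Hd t w' tt tw).
  rewrite hx -EFinB lee_fin; move: hx'; rewrite ltr_norml => /andP[h1 _].
  lra.
Qed.

Lemma liminf0_gt r (q : R -> 'rV[R]_r -> \bar R) P w (c : R) :
  (c%:E < liminf0 q P w)%E -> exists d, 0 < d /\ forall t w', 0 < t < d ->
    enorm (w' - w) < d -> P t w' -> (c%:E < q t w')%E.
Proof.
move=> /ereal_sup_gt [_ [d d0 <-]] H; exists d; split => // t w' tt tw Pt.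
apply: (lt_le_trans H); apply: ereal_inf_lbound; by exists (t, w').
Qed.

Section Partial.
Variables (n m : nat) (f : 'rV[R]_n -> 'rV[R]_m -> R) (xb : 'rV[R]_n) (yb : 'rV[R]_m).

Lemma fjoint_row a b : fjoint f (row_mx a b) = f a b.
Proof. by rewrite /fjoint row_mxKl row_mxKr. Qed.

Lemma z_shift (t : R) u h :
  row_mx xb yb + t *: row_mx u h = row_mx (xb + t *: u) (yb + t *: h).
Proof. by rewrite scale_row_mx add_row_mx. Qed.

Lemma row_mx_sub (u u' : 'rV[R]_n) (h h' : 'rV[R]_m) :
  row_mx u h - row_mx u' h' = row_mx (u - u') (h - h').
Proof. by rewrite opp_row_mx add_row_mx. Qed.

Lemma dq1_y t h : dq1 (fun y => f xb y) yb t h = dq1 (fjoint f) (row_mx xb yb) t (row_mx 0 h).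
Proof. by rewrite /dq1 z_shift scaler0 addr0 !fjoint_row. Qed.

Lemma dq1_x t u : dq1 (fun x => f x yb) xb t u = dq1 (fjoint f) (row_mx xb yb) t (row_mx u 0).
Proof. by rewrite /dq1 z_shift scaler0 addr0 !fjoint_row. Qed.

Lemma haslim_y h L : haslim0 (dq1 (fjoint f) (row_mx xb yb)) (row_mx 0 h) L ->
  haslim0 (dq1 (fun y => f xb y) yb) h L.
Proof.
move=> H e e0; have [d [d0 Hd]] := H e e0; exists d; split => // t w' tt tw.
by rewrite dq1_y; apply: Hd => //; rewrite row_mx_sub subrr enorm_row_mx0l.
Qed.

Lemma haslim_x u L : haslim0 (dq1 (fjoint f) (row_mx xb yb)) (row_mx u 0) L ->
  haslim0 (dq1 (fun x => f x yb) xb) u L.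
Proof.
move=> H e e0; have [d [d0 Hd]] := H e e0; exists d; split => // t w' tt tw.
by rewrite dq1_x; apply: Hd => //; rewrite row_mx_sub subrr enorm_row_mx0r.
Qed.

Lemma dy_joint h L : haslim0 (dq1 (fjoint f) (row_mx xb yb)) (row_mx 0 h) L ->
  d_y f xb yb h = L%:E.
Proof. by move=> H; apply: liminf0_lim; apply: haslim_y. Qed.

Lemma dx_joint u L : haslim0 (dq1 (fjoint f) (row_mx xb yb)) (row_mx u 0) L ->
  d_x f xb yb u = L%:E.
Proof. by move=> H; apply: liminf0_lim; apply: haslim_x. Qed.

Lemma dy_fin h : semidiff (fjoint f) (row_mx xb yb) ->
  exists L, d_y f xb yb h = L%:E /\
    subderiv (fjoint f) (row_mx xb yb) (row_mx 0 h) = L%:E.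
Proof.
move=> /(_ (row_mx 0 h)) [L HL]; exists L; split; first exact: dy_joint.
exact: liminf0_lim.
Qed.

Lemma dx_fin u : semidiff (fjoint f) (row_mx xb yb) ->
  exists L, d_x f xb yb u = L%:E.
Proof. by move=> /(_ (row_mx u 0)) [L HL]; exists L; exact: dx_joint. Qed.

Lemma d2yy_joint h L : semidiff (fjoint f) (row_mx xb yb) ->
  haslim0 (dq2 (fjoint f) (row_mx xb yb)) (row_mx 0 h) L ->
  d2_yy f xb yb h = L%:E.
Proof.
move=> Hs H; apply: liminf0_lim => e e0.
have [d [d0 Hd]] := H e e0; exists d; split => // t w' tt tw.
have -> : dq2 (fun y => f xb y) yb t w' = dq2 (fjoint f) (row_mx xb yb) t (row_mx 0 w').
  have [L' [h1 h2]] := dy_fin w' Hs.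
  rewrite /dq2 z_shift scaler0 addr0 !fjoint_row h2.
  by move: h1; rewrite /d_y => ->.
by apply: Hd => //; rewrite row_mx_sub subrr enorm_row_mx0l.
Qed.

End Partial.

Lemma small_inv (e : R) : 0 < e -> exists N : nat, forall k : nat, (N <= k)%N -> k.+1%:R^-1 < e.
Proof.
move=> e0; exists (Num.truncn e^-1) => k Nk.
have h1 := truncnS_gt (e^-1).
rewrite -[e]invrK ltf_pV2 ?posrE ?invr_gt0 //.
by apply: (lt_le_trans h1); rewrite ler_nat.
Qed.

Lemma bw r (h : nat -> 'rV[R]_r) : (forall k, enorm (h k) <= 1) ->
  exists p, forall e, 0 < e -> forall N, exists k, (N <= k)%N /\ enorm (h k - p) < e.
Proof.
move=> hb.
pose A := closed_ball (0 : 'rV[R]_r) 1.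
have Ae v : A v = (`|v| <= 1).
  by rewrite /A closed_ballE // /closed_ball_ /= sub0r normrN.
have Abnd : bounded_set A.
  exists 1; split; first by rewrite num_real.
  by move=> M M1 v; rewrite Ae => /le_trans; apply; apply: ltW.
have Acl : closed A by exact: closed_ball_closed.
have Acomp : compact A := bounded_closed_compact Abnd Acl.
have [|p [Ap clp]] := Acomp (h @ \oo) _.
  by exists 0%N => // k _ /=; rewrite Ae; apply: le_trans (hb k); exact: mxnorm_le_enorm.
exists p => e e0 N.
have e'0 : 0 < e / r.+1%:R by rewrite divr_gt0.
have [_ [[k /= Nk <-] hk]] := clp [set v | exists2 k, (N <= k)%N & h k = v] (ball p (e / r.+1%:R))
  ltac:(by exists N => // k /= Nk; exists k) (nbhsx_ballx _ _ e'0).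
exists k; split => //.
move: hk; rewrite -ball_normE /ball_ /= => hk.
have H1 := @enorm_le_mxnorm r (h k - p).
rewrite -normrN opprB in hk.
apply: (le_lt_trans H1).
by rewrite mulrC -ltr_pdivlMr.
Qed.

Lemma pick_cc (A B : \bar R) (L2 : R) :
  (A \is a fin_num \/ B \is a fin_num) -> (L2%:E - A - B < 0)%E ->
  exists c c' : R, (c%:E < A)%E /\ (c'%:E < B)%E /\ L2 < c + c'.
Proof.
case: A => [a||]; case: B => [b||] //= Hf H.
- move: H; rewrite -!EFinD lte_fin => H; clear Hf.
  exists (a - (a + b - L2) / 3), (b - (a + b - L2) / 3); rewrite !lte_fin.
  split; [|split]; lra.
all: first [ by case: Hf
  | (clear H Hf; exists (a - 1), (L2 - a + 2); split; [rewrite lte_fin; lra | split; [exact: ltry | lra]])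
  | (clear H Hf; exists (L2 - b + 2), (b - 1); split; [exact: ltry | split; [rewrite lte_fin; lra | lra]])
  | (clear H Hf; exists L2, 1; split; [exact: ltry | split; [exact: ltry | lra]]) ].
Qed.

Lemma claim (n m : nat) (X : set 'rV[R]_n) (Y : set 'rV[R]_m)
  (f : 'rV[R]_n -> 'rV[R]_m -> R) (xb : 'rV[R]_n) (yb : 'rV[R]_m) (tau : R -> R) (d0 : R) :
  max_attained X Y f -> X xb -> Y yb -> radius_function tau -> 0 < d0 ->
  (forall (d : R) x y, 0 < d <= d0 -> (X `&` eball xb d) x -> (Y `&` eball yb d) y ->
      f xb y <= f xb yb /\ ((f xb yb)%:E <= maxY Y f x yb (tau d))%E) ->
  twice_semidiff (fjoint f) (row_mx xb yb) -> separation_property f xb yb ->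
  (forall h : 'rV[R]_m, tangent_cone Y yb h -> h != 0 ->
     d_y f xb yb h = 0%E ->
     (d2delta X xb (d_x f xb yb) 0 \is a fin_num \/
      d2delta Y yb (d_y f xb yb) h \is a fin_num) /\
     (d2_yy f xb yb h - d2delta X xb (d_x f xb yb) 0
        - d2delta Y yb (d_y f xb yb) h < 0)%E) ->
  exists K D : R, 0 < K /\ 0 < D /\ forall d x, 0 < d <= D -> (X `&` eball xb d) x ->
     ((f xb yb)%:E <= maxY Y f x yb (K * d))%E.
Proof.
move=> Hmax Xxb Yyb [tau0 [tau00 taulim]] d00 Hmm [Hsd Hsd2] Hsep Hhyp.
case: (pselect (exists K D : R, 0 < K /\ 0 < D /\ forall d x, 0 < d <= D -> (X `&` eball xb d) x ->
     ((f xb yb)%:E <= maxY Y f x yb (K * d))%E)) => // Hn; exfalso.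
pose P := fun (k : nat) (p : R * 'rV[R]_n * 'rV[R]_m) =>
  [/\ 0 < p.1.1, p.1.1 <= d0 / k.+1%:R, X p.1.2, enorm (p.1.2 - xb) <= p.1.1 &
   [/\ Y p.2, enorm (p.2 - yb) <= tau p.1.1, f xb yb <= f p.1.2 p.2 &
       k.+1%:R * p.1.1 < enorm (p.2 - yb)]].
have Hk : forall k, exists p, P k p.
  move=> k.
  have K0 : 0 < k.+1%:R :> R by rewrite ltr0n.
  have D0 : 0 < d0 / k.+1%:R by rewrite divr_gt0.
  have : ~ (forall d x, 0 < d <= d0 / k.+1%:R -> (X `&` eball xb d) x ->
              ((f xb yb)%:E <= maxY Y f x yb (k.+1%:R * d))%E).
    by move=> H; apply: Hn; exists k.+1%:R, (d0 / k.+1%:R).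
  move=> /existsNP [d /existsNP [x /not_implyP [dD /not_implyP [[Xx xd] /negP]]]].
  rewrite -ltNge => Hlt.
  case/andP: (dD) => dpos dD'.
  have dd0 : d <= d0.
    apply: (le_trans dD'); rewrite ler_pdivrMr // ler_pMr // ler1n //.
  have ybb : eball yb d yb by rewrite /eball /= subrr enorm0 ltW.
  have [_ H2] := Hmm d x yb (introT andP (conj dpos dd0)) (conj Xx xd) (conj Yyb ybb).
  have [ys [Yys ysb] ysmax] := Hmax x yb (tau d) Xx Yyb (tau0 d (ltW dpos)).
  have Hle : f xb yb <= f x ys.
    rewrite -lee_fin; apply: (le_trans H2); apply: ge_ereal_sup => _ [y' Hy' <-].
    by rewrite lee_fin; apply: ysmax.
  have Hs : k.+1%:R * d < enorm (ys - yb).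
    rewrite ltNge; apply/negP => Hle2; move: Hlt; rewrite ltNge => /negP; apply.
    apply: (@le_trans _ _ (f x ys)%:E); first by rewrite lee_fin.
    by apply: ereal_sup_ubound; exists ys.
  by exists (d, x, ys); split.
have [g Hg] := choice Hk.
pose dk k := (g k).1.1. pose xk k := (g k).1.2. pose yk k := (g k).2.
pose s k := enorm (yk k - yb).
pose u k := (s k)^-1 *: (xk k - xb).
pose hh k := (s k)^-1 *: (yk k - yb).
have Hgk k : [/\ 0 < dk k, dk k <= d0 / k.+1%:R, X (xk k), enorm (xk k - xb) <= dk k &
   [/\ Y (yk k), enorm (yk k - yb) <= tau (dk k), f xb yb <= f (xk k) (yk k) &
       k.+1%:R * dk k < s k]] := Hg k.
have spos k : 0 < s k.
  case: (Hgk k) => dpos _ _ _ [_ _ _ H]; apply: lt_trans H; rewrite mulr_gt0 // ltr0n.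
have sne k : s k != 0 by rewrite gt_eqF.
have xkE k : xb + s k *: u k = xk k by rewrite /u scalerA divff // scale1r addrC subrK.
have ykE k : yb + s k *: hh k = yk k by rewrite /hh scalerA divff // scale1r addrC subrK.
have hhn k : enorm (hh k) = 1 by rewrite /hh enormZ ger0_norm ?invr_ge0 ?ltW // mulVf.
have un k : enorm (u k) < k.+1%:R^-1.
  case: (Hgk k) => dpos _ _ xd [_ _ _ Hs].
  rewrite /u enormZ ger0_norm ?invr_ge0 ?ltW // mulrC ltr_pdivrMr //.
  rewrite mulrC ltr_pdivlMr ?ltr0n //; apply: le_lt_trans Hs; rewrite mulrC.
  by apply: ler_wpM2l.
have event : forall e, 0 < e -> exists N, forall k, (N <= k)%N -> s k < e /\ enorm (u k) < e.
  move=> e e0; have [d1 [d10 Hd1]] := taulim e e0.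
  have mpos : 0 < Num.min e (d1 / d0) by rewrite lt_min e0 divr_gt0.
  have [N HN] := small_inv _ mpos.
  exists N => k Nk; have := HN k Nk; rewrite lt_min => /andP [h1 h2].
  case: (Hgk k) => dpos dle _ _ [_ stau _ _].
  split; last exact: lt_trans (un k) h1.
  apply: le_lt_trans stau _; apply: Hd1; rewrite dpos /=.
  apply: le_lt_trans dle _.
  have -> : d1 = d0 * (d1 / d0) by rewrite mulrC divfK ?gt_eqF.
  by rewrite ltr_pM2l.
have hb : forall k, enorm (hh k) <= 1 by move=> k; rewrite hhn.
have [p Hp] := bw _ hh hb.
have Good : forall e, 0 < e -> exists k, [/\ s k < e, enorm (u k) < e & enorm (hh k - p) < e].
  move=> e e0; have [N HN] := event e e0; have [k [Nk hk]] := Hp e e0 N.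
  by have [h1 h2] := HN k Nk; exists k; split.
have pn0 : p != 0.
  apply/negP => /eqP p0; have [k [_ _]] := Good (1 / 2) ltac:(by rewrite divr_gt0).
  by rewrite p0 subr0 hhn; lra.
have Tp : tangent_cone Y yb p.
  have : forall j : nat, exists k, s k < j.+1%:R^-1 /\ enorm (hh k - p) < j.+1%:R^-1.
    move=> j; have [k [h1 _ h3]] := Good j.+1%:R^-1 ltac:(by rewrite invr_gt0 ltr0n).
    by exists k.
  move=> /choice [phi Hphi].
  exists (fun j => s (phi j)), (fun j => hh (phi j)); split; first by move=> k.
  split; first by move=> j; rewrite ykE; case: (Hgk (phi j)) => _ _ _ _ [].
  move=> e e0; have [N HN] := small_inv _ e0; exists N => j Nj.
  have [h1 h2] := Hphi j; have h3 := HN j Nj; split; exact: lt_trans h3.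
have zE k : row_mx xb yb + s k *: row_mx (u k) (hh k) = row_mx (xk k) (yk k).
  by rewrite z_shift xkE ykE.
have [L1 HL1] := Hsd (row_mx 0 p).
have dyp : d_y f xb yb p = L1%:E := dy_joint _ _ _ _ _ _ _ HL1.
have L1ge : 0 <= L1.
  apply/ler_addgt0Pr => e e0.
  have [d [d0' Hd]] := HL1 e e0.
  have mpos : 0 < Num.min (d / 2) d0 by rewrite lt_min d00 divr_gt0.
  have [k [h1 h2 h3]] := Good _ mpos.
  move: h1 h2 h3; rewrite !lt_min => /andP[s1 s2] /andP[u1 _] /andP[hh1 _].
  have tt : 0 < s k < d by rewrite spos /=; lra.
  have tw : enorm (row_mx (u k) (hh k) - row_mx 0 p) < d.
    rewrite row_mx_sub subr0; apply: le_lt_trans (enorm_row_mx_le _ _ _ _) _; lra.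
  have := Hd _ _ tt tw; rewrite /dq1 zE !fjoint_row -EFinB /= lte_fin.
  case: (Hgk k) => _ _ _ _ [_ _ Hf _].
  have : 0 <= (f (xk k) (yk k) - f xb yb) / s k by rewrite divr_ge0 ?subr_ge0 // ltW.
  move: ((f (xk k) (yk k) - f xb yb) / s k) => v v0; rewrite ltr_norml => /andP[_ ?]; lra.
have L1le : L1 <= 0.
  apply/ler_addgt0Pr => e e0.
  have [d [d0' Hd]] := HL1 e e0.
  have mpos : 0 < Num.min (d / 2) d0 by rewrite lt_min d00 divr_gt0.
  have [k [h1 h2 h3]] := Good _ mpos.
  move: h1 h2 h3; rewrite !lt_min => /andP[s1 s2] /andP[u1 _] /andP[hh1 _].
  have tt : 0 < s k < d by rewrite spos /=; lra.
  have tw : enorm (row_mx (0 : 'rV[R]_n) (hh k) - row_mx 0 p) < d.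
    rewrite row_mx_sub subrr enorm_row_mx0l; lra.
  have := Hd _ _ tt tw; rewrite /dq1 z_shift scaler0 addr0 ykE !fjoint_row -EFinB /= lte_fin.
  have sk : 0 < s k <= d0 by rewrite spos /=; lra.
  have Xb : (X `&` eball xb (s k)) xb by split => //; rewrite /eball /= subrr enorm0 ltW.
  have Yb : (Y `&` eball yb (s k)) (yk k).
    by split; [case: (Hgk k) => _ _ _ _ [] | rewrite /eball /=].
  have [Hf _] := Hmm _ _ _ sk Xb Yb.
  have : (f xb (yk k) - f xb yb) / s k <= 0.
    by rewrite pmulr_lle0 ?invr_gt0 // subr_le0.
  move: ((f xb (yk k) - f xb yb) / s k) => v v0; rewrite ltr_norml => /andP[? _]; lra.
have dyp0 : d_y f xb yb p = 0%E.
  by rewrite dyp; congr (_%:E); apply/eqP; rewrite eq_le L1le L1ge.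
have [Hfin HA] := Hhyp p Tp pn0 dyp0.
have [L2 HL2] := Hsd2 (row_mx 0 p).
have d2p : d2_yy f xb yb p = L2%:E := d2yy_joint _ _ _ _ _ _ _ Hsd HL2.
rewrite d2p in HA.
have [c [c' [hc [hc' hL2]]]] := pick_cc _ _ _ Hfin HA.
have [dA [dA0 HdA]] := liminf0_gt _ _ _ _ _ hc.
have [dB [dB0 HdB]] := liminf0_gt _ _ _ _ _ hc'.
have eps0 : 0 < c + c' - L2 by lra.
have [d2 [d20 Hd2]] := HL2 _ eps0.
have mpos : 0 < Num.min (Num.min dA dB) (Num.min (d2 / 2) d0).
  by rewrite !lt_min dA0 dB0 d00 divr_gt0.
have [k [h1 h2 h3]] := Good _ mpos.
move: h1 h2 h3; rewrite !lt_min => /andP[/andP[sA sB] /andP[s2 s0]]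
  /andP[/andP[uA uB] /andP[u2 _]] /andP[/andP[hA' hB'] /andP[hh2 _]].
have [Dx hDx] := dx_fin _ _ f xb yb (u k) Hsd.
have [Dy [hDy _]] := dy_fin _ _ f xb yb (hh k) Hsd.
have hsep : subderiv (fjoint f) (row_mx xb yb) (row_mx (u k) (hh k)) = (Dx + Dy)%:E.
  by have := Hsep (u k) (hh k); rewrite hDx hDy.
have ttA : 0 < s k < dA by rewrite spos.
have twA : enorm (u k - 0) < dA by rewrite subr0.
have XA : X (xb + s k *: u k) by rewrite xkE; case: (Hgk k).
have := HdA _ _ ttA twA XA; rewrite hDx -!EFinM lte_fin => hA.
have ttB : 0 < s k < dB by rewrite spos.
have YB : Y (yb + s k *: hh k) by rewrite ykE; case: (Hgk k) => _ _ _ _ [].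
have := HdB _ _ ttB hB' YB; rewrite hDy -!EFinM lte_fin => hB.
have tt2 : 0 < s k < d2 by rewrite spos /=; lra.
have tw2 : enorm (row_mx (u k) (hh k) - row_mx 0 p) < d2.
  rewrite row_mx_sub subr0; apply: le_lt_trans (enorm_row_mx_le _ _ _ _) _; lra.
have := Hd2 _ _ tt2 tw2; rewrite /dq2 zE !fjoint_row hsep.
rewrite -EFinM -EFinB -?EFinM -?EFinB /=.
rewrite lte_fin ltr_norml => /andP[_ hQ].
case: (Hgk k) => _ _ _ _ [_ _ Hf _].
have sk0 := spos k.
have Hid : (f (xk k) (yk k) - f xb yb - s k * (Dx + Dy)) * (2 / s k ^+ 2) =
   2 * (f (xk k) (yk k) - f xb yb) / s k ^+ 2 + (-2 * Dx * (s k)^-1) + (-2 * Dy * (s k)^-1).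
  by field; rewrite gt_eqF.
have T0 : 0 <= 2 * (f (xk k) (yk k) - f xb yb) / s k ^+ 2.
  by rewrite divr_ge0 ?mulr_ge0 ?subr_ge0 ?exprn_ge0 // ltW.
rewrite Hid in hQ.
move: T0 hQ hA hB.
move: (2 * (f (xk k) (yk k) - f xb yb) / s k ^+ 2) (-2 * Dx * (s k)^-1) (-2 * Dy * (s k)^-1).
move=> T a b.
lra.
Qed.
End H.

Theorem mainTheorem8 (R : realType) (n m : nat)
  (X : set 'rV[R]_n) (Y : set 'rV[R]_m) (f : 'rV[R]_n -> 'rV[R]_m -> R)
  (xb : 'rV[R]_n) (yb : 'rV[R]_m) :
  closed X -> closed Y -> X !=set0 -> Y !=set0 ->
  max_attained X Y f ->
  local_minimax X Y f xb yb ->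
  twice_semidiff (fjoint f) (row_mx xb yb) ->
  separation_property f xb yb ->
  (forall h : 'rV[R]_m, tangent_cone Y yb h -> h != 0 ->
     d_y f xb yb h = 0%E ->
     (d2delta X xb (d_x f xb yb) 0 \is a fin_num \/
      d2delta Y yb (d_y f xb yb) h \is a fin_num) /\
     (d2_yy f xb yb h - d2delta X xb (d_x f xb yb) 0
        - d2delta Y yb (d_y f xb yb) h < 0)%E) ->
  calm_local_minimax X Y f xb yb.
Proof.
move=> cX cY neX neY Hmax [Xxb [Yyb [tau [Htau [d0 [d00 Hmm]]]]]] Hts Hsep Hhyp.
have [K [D [K0 [D0 HKD]]]] := @claim R n m X Y f xb yb tau d0 Hmax Xxb Yyb Htau d00 Hmm Hts Hsep Hhyp.
split => //; split => //.
exists (fun d => K * d); split; [|split].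
- split; first by move=> d d_ge0; exact: mulr_ge0 (ltW K0) d_ge0.
  split; first by rewrite mulr0.
  move=> eps eps0; exists (eps / K); split; first by rewrite divr_gt0.
  by move=> d /andP[_ hd]; rewrite mulrC -ltr_pdivlMr.
- by exists K, 1; split => //; split => // d _; exact: lexx.
- exists (Num.min d0 D); split; first by rewrite lt_min d00 D0.
  move=> d x y /andP[dpos dle] Hx Hy; move: dle; rewrite le_min => /andP[dd0 dD].
  split; first by have [] := Hmm d x y (introT andP (conj dpos dd0)) Hx Hy.
  by apply: HKD => //; rewrite dpos dD.
Qed.
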